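(* Let $g$ be a positive integer, let $l\ge1$, and let $(a,a+g)$ be a consecutive prospective prime pair with gap $g$ in $S_l$. For $k>l+2$ and $0\le m\le P_k-1$ let $\mathring{n}^g_{S_k^{(m)}}$ be the number of tuples $(m_{l+1},\dots,m_k)$ with $0\le m_j\le P_j-1$ and $m_k=m$ such that, with $M=\sum_{j=l+1}^km_jP_{j-1}\#$, both $a+M$ and $a+g+M$ are coprime to $P_k\#$. Then for all sufficiently large $P_k$ and every $0\le m\le P_k-1$, \[\mathring{n}^g_{S_k^{(m)}}\ge\mathring{n}^g_{k-1}-2\,\mathring{n}^g_{k-2}.\]
   Context: $P_k$ denotes the $k$-th prime ($P_1=2$), $P_k\#=\prod_{i=1}^kP_i$. $S_k=\{N\in\mathbb{N}:5\le N\le4+P_k\#\}$, $S_k^{(m)}=\{N:5+mP_{k-1}\#\le N\le4+(m+1)P_{k-1}\#\}$. A prospective prime in $S_k$ is an $N\in S_k$ coprime to $P_k\#$; prospective primes $a<b$ in $S_k$ are consecutive if no integer strictly between them is coprime to $P_k\#$; a consecutive prospective prime pair with gap $g$ is a pair $(a,a+g)$ of consecutive prospective primes. For $j>l$, $\mathring{n}^g_j=\prod_{i=l+1}^{j}(P_i-2)\prod_{l+1\le i\le j,\,P_i\mid g}\frac{P_i-1}{P_i-2}$. *)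

(* Defs.v *)
From mathcomp Require Import all_boot all_order all_algebra.
Set Implicit Arguments. Unset Strict Implicit. Unset Printing Implicit Defensive.
Import Order.TTheory GRing.Theory Num.Theory.

Lemma next_prime_ex (n : nat) : exists p, (n < p) && prime p.
Proof. case: (prime_above n) => p H1 H2; exists p; by rewrite H1 H2. Qed.

Definition next_prime (n : nat) : nat := ex_minn (next_prime_ex n).

Fixpoint nthprime0 (n : nat) : nat :=
  if n is n'.+1 then next_prime (nthprime0 n') else 2.

(* P k = k-th prime, P 1 = 2 (P 0 is junk, never used). *)
Definition P (k : nat) : nat := nthprime0 k.-1.

Definition primorial (k : nat) : nat := \prod_(1 <= i < k.+1) P i.

Definition inS (k N : nat) : bool := (5 <= N) && (N <= 4 + primorial k).

Definition prospective (k N : nat) : bool := inS k N && coprime N (primorial k).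

Definition cons_pp_pair (k a g : nat) : Prop :=
  [/\ 0 < g, prospective k a, prospective k (a + g) &
      forall N, a < N < a + g -> ~~ coprime N (primorial k)].

(* \mathring{n}^g_{S_k^{(m)}} : the tuple (m_{l+1},...,m_k) is encoded as
   f : 'I_(k-l) -> 'I_(P k), with m_{l+1+i} = f i. *)
Definition nring_S (a g l k m : nat) : nat :=
  #|[set f : {ffun 'I_(k - l) -> 'I_(P k)} |
     [forall i : 'I_(k - l), f i < P (l.+1 + i)] &&
     [forall i : 'I_(k - l), (i == (k - l).-1 :> nat) ==> (f i == m :> nat)] &&
     (let M := \sum_(i < k - l) f i * primorial (l + i) in
      coprime (a + M) (primorial k) && coprime (a + g + M) (primorial k))]|.

Local Open Scope ring_scope.
Definition nring (g l j : nat) : rat :=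
  (\prod_(l.+1 <= i < j.+1) ((P i)%:R - 2%:R)) *
  (\prod_(l.+1 <= i < j.+1 | (P i %| g)%N) (((P i)%:R - 1) / ((P i)%:R - 2%:R))).

(* Main.v *)
Require Import Defs.
From mathcomp Require Import all_boot all_order all_algebra.
Import Order.TTheory GRing.Theory Num.Theory.
From mathcomp Require Import zify ring lra.

Lemma nthprime0_prime n : prime (nthprime0 n).
Proof.
case: n => [|n] //=. rewrite /next_prime. case: ex_minnP => p /andP[_ ->] //.
Qed.

Lemma P_prime i : prime (P i).
Proof. exact: nthprime0_prime. Qed.

Lemma P_succ i : 0 < i -> P i < P i.+1.
Proof.
case: i => [|i] //= _. rewrite /P /= /next_prime. case: ex_minnP => p /andP[h _] //.
Qed.

Lemma P_mono i j : 0 < i -> i < j -> P i < P j.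
Proof.
move=> i0; elim: j => [|j IH] //. rewrite ltnS leq_eqVlt => /orP[/eqP<-|h].
  exact: P_succ _ i0.
have hj : 0 < j by lia.
have := IH h; have := P_succ _ hj. lia.
Qed.

Lemma P_ge3 i : 1 < i -> 2 < P i.
Proof. move=> h. have := P_mono 1 i isT h. by rewrite /P. Qed.

Lemma primorialS J : primorial J.+1 = primorial J * P J.+1.
Proof. by rewrite /primorial big_nat_recr. Qed.

Lemma P_ndvd_prim k : 0 < k -> ~~ (P k %| primorial k.-1).
Proof.
move=> k0; rewrite /primorial Euclid_dvd_prod ?P_prime //.
rewrite big_has; apply/hasPn => i; rewrite mem_iota => /andP[i1 i2].
rewrite dvdn_prime2 ?P_prime //. have H := P_mono i k i1.
 apply/negP => /eqP E. have : i < k by lia. move/H; rewrite E ltnn //.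
Qed.

Fixpoint Csum (K : nat) (D : nat -> nat -> bool) (w : nat -> nat) (j : nat)
  (F : nat -> nat) {struct j} : nat :=
  if j is j'.+1 then Csum K D w j' (fun M => \sum_(x < K | D j' x) F (M + x * w j'))
  else F 0.


Definition hext K n (p : {ffun 'I_n -> 'I_K} * 'I_K) : {ffun 'I_n.+1 -> 'I_K} :=
  [ffun i : 'I_n.+1 => if unlift ord_max i is Some j then p.1 j else p.2].
Definition hres K n (f : {ffun 'I_n.+1 -> 'I_K}) : {ffun 'I_n -> 'I_K} * 'I_K :=
  ([ffun j => f (lift ord_max j)], f ord_max).

Lemma hext_bij K n : bijective (@hext K n).
Proof.
exists (@hres K n).
- case=> f x; rewrite /hres /hext /=; congr pair.
    by apply/ffunP => j; rewrite !ffunE liftK.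
  by rewrite ffunE unlift_none.
- move=> f; apply/ffunP => i; rewrite /hres /hext ffunE.
  by case: unliftP => [j ->|->] /=; rewrite ?ffunE.
Qed.

Lemma Csum_ffun K (D : nat -> nat -> bool) (w : nat -> nat) n (F : nat -> nat) :
  \sum_(f : {ffun 'I_n -> 'I_K} | [forall i : 'I_n, D i (f i)]) F (\sum_(i < n) f i * w i)
  = Csum K D w n F.
Proof.
elim: n F => [|n IH] F /=.
  rewrite (eq_bigl xpredT) => [|f]; last by apply/forallP => -[].
  rewrite (eq_bigr (fun _ => F 0)) => [|f _]; last by rewrite big_ord0.
  by rewrite sum_nat_const card_ffun !card_ord expn0 mul1n.
rewrite -IH pair_big /= (reindex (@hext K n)); last exact: onW_bij (hext_bij K n).
apply: eq_big => [[f x]|[f x] _] /=.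
  apply/idP/idP.
    move/forallP => H; apply/andP; split.
      apply/forallP => i; have := H (lift ord_max i).
      by rewrite /hext ffunE liftK lift_max.
    by have := H ord_max; rewrite /hext ffunE unlift_none.
  case/andP => /forallP H1 H2; apply/forallP => i; rewrite /hext ffunE.
  case: unliftP => [j ->|->] //=.
  by rewrite /bump leqNgt ltn_ord add0n.
rewrite big_ord_recr /=; congr (F (_ + _)).
  apply: eq_bigr => i _; rewrite /hext ffunE.
  have -> : widen_ord (leqnSn n) i = lift ord_max i by apply/val_inj; rewrite /= /bump leqNgt ltn_ord.
  by rewrite liftK.
by rewrite /hext ffunE unlift_none.
Qed.

Lemma L1 p Q z : prime p -> ~~ (p %| Q) -> \sum_(x < p) (p %| z + x * Q : nat) = 1.
Proof.
move=> pp pQ; have p0 := prime_gt0 pp.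
pose h (x : 'I_p) : 'I_p := Ordinal (ltn_pmod (z + x * Q) p0).
have key : forall a b : 'I_p, b <= a -> h a = h b -> a = b.
  move=> a b ba /(congr1 val) /= /eqP E.
  move: E; rewrite eqn_modDl eqn_mod_dvd ?leq_mul2r ?ba ?orbT // -mulnBl.
  rewrite Euclid_dvdM // (negbTE pQ) orbF => Hd.
  apply/val_inj => /=.
  have : a - b < p by have := ltn_ord a; lia.
  case E2: (a - b) Hd => [|d] Hd; first by lia.
  by move/dvdn_leq: Hd => /(_ isT); lia.
have hinj : injective h.
  move=> a b E; case: (leqP b a) => ba; first exact: key.
  by apply/esym/key => //; apply: ltnW.
transitivity #|h @^-1: [set Ordinal p0]|; last by rewrite card_preimset // cards1.
rewrite -sum1_card [RHS]big_mkcond /=; apply: eq_bigr => x _.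
rewrite !inE -val_eqE /= /dvdn. by case: (_ == 0).
Qed.

Lemma L2 p Q z g : prime p -> ~~ (p %| Q) ->
  \sum_(x < p) (~~ (p %| z + x * Q) && ~~ (p %| z + x * Q + g) : nat) = p - 2 + (p %| g).
Proof.
move=> pp pQ; have p2 := prime_gt1 pp.
have pw : forall A B : bool, (~~ A && ~~ B : nat) + A + B = 1 + (A && B).
  by do 2 case.
have S1 := L1 p Q z pp pQ.
have S2 := L1 p Q (z + g) pp pQ.
have S3 : \sum_(x < p) (p %| z + x * Q) && (p %| z + x * Q + g) = (p %| g).
  case: (boolP (p %| g)) => pg.
    rewrite -[nat_of_bool true]/1 -S1; apply: eq_bigr => x _. by rewrite (dvdn_addl _ pg) andbb.
  rewrite big1 // => x _. case: (boolP (p %| z + x * Q)) => //= H.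
  by rewrite (dvdn_addr _ H) (negbTE pg).
have : \sum_(x < p) ((~~ (p %| z + x * Q) && ~~ (p %| z + x * Q + g) : nat)
     + (p %| z + x * Q) + (p %| z + x * Q + g)) = p + (p %| g).
  rewrite (eq_bigr (fun x : 'I_p => 1 + ((p %| z + x * Q) && (p %| z + x * Q + g)))).
    by rewrite big_split /= S3 sum_nat_const card_ord muln1.
  by move=> x _; rewrite pw.
rewrite !big_split /= S1.
have -> : \sum_(x < p) (p %| z + x * Q + g) = 1.
  by rewrite -S2; apply: eq_bigr => x _; rewrite addnAC.
lia.
Qed.


Lemma Csum_ext K (D : nat -> nat -> bool) (w : nat -> nat) j F G : (forall M, F M = G M) -> Csum K D w j F = Csum K D w j G.
Proof.
elim: j F G => [|j IH] F G H /=; first exact: H.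
by apply: IH => M; apply: eq_bigr => x _; apply: H.
Qed.

Lemma Csum_le K (D : nat -> nat -> bool) (w : nat -> nat) j F G : (forall M, F M <= G M) -> Csum K D w j F <= Csum K D w j G.
Proof.
elim: j F G => [|j IH] F G H /=; first exact: H.
by apply: IH => M; apply: leq_sum => x _; apply: H.
Qed.

Lemma Csum_add K (D : nat -> nat -> bool) (w : nat -> nat) j F G :
  Csum K D w j (fun M => F M + G M) = Csum K D w j F + Csum K D w j G.
Proof.
elim: j F G => [|j IH] F G //=.
by rewrite -IH; apply: Csum_ext => M; rewrite big_split.
Qed.

Lemma Csum_scale K (D : nat -> nat -> bool) (w : nat -> nat) j c F :
  Csum K D w j (fun M => c * F M) = c * Csum K D w j F.
Proof.
elim: j F => [|j IH] F //=.
by rewrite -IH; apply: Csum_ext => M; rewrite big_distrr.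
Qed.

Definition good (g J z : nat) : bool :=
  coprime z (primorial J) && coprime (z + g) (primorial J).

Lemma goodS g J z : good g J.+1 z =
  good g J z && ~~ (P J.+1 %| z) && ~~ (P J.+1 %| z + g).
Proof.
have cp : forall n, coprime n (P J.+1) = ~~ (P J.+1 %| n).
  by move=> n; rewrite coprime_sym prime_coprime ?P_prime.
rewrite /good primorialS !coprimeMr !cp.
by case: (coprime z _) (coprime (z + g) _) (P J.+1 %| z) (P J.+1 %| z + g) => [] [] [] [].
Qed.

Lemma good_shift g J Q z x : primorial J %| Q -> good g J (z + x * Q) = good g J z.
Proof.
case/dvdnP => t ->; rewrite /good.
rewrite -(coprime_modl (z + _)) -(coprime_modl (z + _ + g)).
rewrite addnAC !(addnC _ (x * _)) mulnA !modnMDl !coprime_modl //.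
Qed.

Lemma prim_dvd J J' : J <= J' -> primorial J %| primorial J'.
Proof.
elim: J' => [|J' IH]; first by rewrite leqn0 => /eqP ->.
rewrite leq_eqVlt => /orP[/eqP -> //|h].
by rewrite primorialS; apply: dvdn_mulr; apply: IH.
Qed.

Definition D2 (l i x : nat) : bool := x < P (l.+1 + i).
Definition wl (l i : nat) : nat := primorial (l + i).
Definition cc (g i : nat) : nat := P i - 2 + (P i %| g).
Definition Nn (g l j : nat) : nat := \prod_(l.+1 <= i < (l + j).+1) cc g i.

Lemma andb3_nat (a b c : bool) : (a && b && c : nat) = a * (b && c).
Proof. by case: a; case: b; case: c. Qed.

Lemma countA g l K j y : (forall i, i < j -> P (l.+1 + i) <= K) ->
  Csum K (D2 l) (wl l) j (fun M => good g (l + j) (y + M)) = Nn g l j * good g l y.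
Proof.
elim: j y => [|j IH] y HK /=.
  by rewrite /Nn !addn0 big_geq // mul1n.
rewrite (@Csum_ext _ _ _ _ _ (fun M => cc g (l + j).+1 * good g (l + j) (y + M))).
  rewrite Csum_scale IH; last by move=> i hi; apply: HK; apply: ltnW.
  have -> : Nn g l j.+1 = Nn g l j * cc g (l + j).+1.
    by rewrite /Nn addnS big_nat_recr //= ltnS leq_addr.
  by rewrite mulnCA mulnA.
move=> M; rewrite /D2 (big_ord_narrow (HK j (ltnSn j))) /=.
rewrite addnS addSn.
rewrite (eq_bigr (fun x : 'I_(P (l + j).+1) => good g (l + j) (y + M) *
   (~~ (P (l + j).+1 %| (y + M) + x * wl l j) &&
    ~~ (P (l + j).+1 %| (y + M) + x * wl l j + g)))).
  rewrite -big_distrr L2 ?P_prime //; first by rewrite mulnC.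
  by have := P_ndvd_prim (l + j).+1 isT.
move=> x _; rewrite goodS addnA good_shift // andb3_nat //.
Qed.

Lemma P_le_top l j i : i < j.+1 -> P (l.+1 + i) <= P (l + j).+2.
Proof. move=> h; apply: ltnW; apply: P_mono => //; lia. Qed.

Lemma qndvd l j : ~~ (P (l + j).+2 %| primorial (l + j)).
Proof.
apply/negP => H; have := P_ndvd_prim (l + j).+2 isT; rewrite /=.
by rewrite (dvdn_trans H) // prim_dvd.
Qed.

Lemma countB g l j y :
  Nn g l j.+1 * good g l y <=
  Csum (P (l + j).+2) (D2 l) (wl l) j.+1 (fun M => good g (l + j).+2 (y + M))
  + 2 * (Nn g l j * good g l y).
Proof.
set K := P (l + j).+2.
have HK : forall i, i < j.+1 -> P (l.+1 + i) <= K by move=> i; apply: P_le_top.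
rewrite -(countA g l K j.+1 y HK) -(countA g l K j y (fun i hi => HK i (ltnW hi))).
set q := K.
apply: leq_trans (@Csum_le _ _ _ _ _
   (fun M => good g (l + j).+2 (y + M) +
      good g (l + j) (y + M) * ((q %| y + M) + (q %| y + M + g))) _) _.
  move=> M; rewrite addnS !goodS /q /K.
  by case: (good _ _ _) (P _ %| _) (P _ %| _) (P _ %| _) (P _ %| _) => [] [] [] [] [].
rewrite Csum_add leq_add2l /= -Csum_scale.
apply: Csum_le => M.
rewrite (eq_bigr (fun x : 'I_K => good g (l + j) (y + M) *
   ((q %| (y + M) + x * wl l j) + (q %| (y + M) + x * wl l j + g)))); last first.
  by move=> x _; rewrite !addnA good_shift // prim_dvd.
rewrite -big_distrr [X in X <= _]mulnC leq_mul2r; apply/orP; right.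
apply: leq_trans (_ : _ <= \sum_(x < K) ((q %| (y + M) + x * wl l j) +
     (q %| (y + M) + x * wl l j + g))) _.
  by rewrite [X in X <= _]big_mkcond; apply: leq_sum => x _; case: ifP.
rewrite big_split /= L1 ?P_prime ?qndvd //.
have -> : \sum_(x < K) (q %| y + M + x * wl l j + g) = 1.
  rewrite -(L1 q (wl l j) (y + M + g) (P_prime (l + j).+2) (qndvd l j)).
  by apply: eq_bigr => x _; rewrite addnAC.
by [].
Qed.

Lemma Csum_eqD K D1 D2' w j F : (forall i x, i < j -> D1 i x = D2' i x) ->
  Csum K D1 w j F = Csum K D2' w j F.
Proof.
elim: j F => [|j IH] F H //=.
rewrite IH; last by move=> i x hi; apply: H; apply: ltnW.
by apply: Csum_ext => M; apply: eq_bigl => x; rewrite H.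
Qed.

Lemma forall_andb (T : finType) (a b : pred T) :
  [forall i, a i && b i] = [forall i, a i] && [forall i, b i].
Proof.
apply/forallP/andP => [H|[/forallP H1 /forallP H2] i].
  by split; apply/forallP => i; case/andP: (H i).
by rewrite H1 H2.
Qed.

Lemma CsumS K D w j F : Csum K D w j.+1 F =
  Csum K D w j (fun M => \sum_(x < K | D j x) F (M + x * w j)).
Proof. by []. Qed.

Local Open Scope ring_scope.

Lemma nring_Nn g l j : (0 < l)%N -> nring g l (l + j) = (Nn g l j)%:R.
Proof.
move=> l0; rewrite /nring /Nn /cc natr_prod [X in _ * X]big_mkcond -big_split /=.
apply: eq_big_nat => i /andP[hi1 hi2].
have p3 : (2 < P i)%N by apply: P_ge3; lia.
have nz : (P i)%:R - 2%:R != 0 :> rat by rewrite -natrB ?pnatr_eq0; lia.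
case: (P i %| g)%N => /=.
  rewrite mulrCA mulfV // mulr1 natrD natrB; last by lia.
  by rewrite -addrA; congr (_ + _); lra.
by rewrite mulr1 addn0 natrB //; lia.
Qed.

Theorem corollary1 (g l a : nat) :
  (0 < g)%N -> (1 <= l)%N -> cons_pp_pair l a g ->
  exists N : nat, forall k m : nat,
    (N <= P k)%N -> (l.+2 < k)%N -> (m <= (P k).-1)%N ->
    nring g l k.-1 - 2%:R * nring g l k.-2 <= ((nring_S a g l k m)%:R : rat).
Proof.
move=> g0 l1 [_ /andP[_ ca] /andP[_ cag] _].
exists 0%N => k m _ hk hm.
have [j Ek] : exists j, k = (l + j).+2 by exists (k - l - 2)%N; lia.
subst k.
have hmk : (m < P (l + j).+2)%N.
  have : (0 < P (l + j).+2)%N by apply: prime_gt0; apply: P_prime.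
  lia.
set y := (a + m * wl l j.+1)%N.
have gy : good g l y.
  rewrite /y good_shift; first by rewrite /good ca cag.
  by rewrite /wl prim_dvd // leq_addr.
have HS : nring_S a g l (l + j).+2 m =
   Csum (P (l + j).+2) (D2 l) (wl l) j.+1 (fun M => good g (l + j).+2 (y + M)).
  rewrite /nring_S.
  have -> : ((l + j).+2 - l)%N = j.+2 by lia.
  rewrite -sum1_card.
  pose Dk := fun i x => D2 l i x && ((i == j.+1) ==> (x == m)).
  transitivity (\sum_(f : {ffun 'I_j.+2 -> 'I_(P (l+j).+2)} |
     [forall i : 'I_j.+2, Dk i (f i)])
     (good g (l+j).+2 (a + \sum_(i < j.+2) f i * wl l i) : nat)).
    rewrite [LHS]big_mkcond [RHS]big_mkcond; apply: eq_bigr => f _.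
    rewrite inE forall_andb /good /= [(a + g + _)%N]addnAC.
    rewrite /D2 /wl; case: ([forall i, _] && _) => //=.
  rewrite (Csum_ffun (P (l+j).+2) Dk (wl l) j.+2 (fun M => good g (l+j).+2 (a + M))).
  rewrite [LHS]CsumS.
  rewrite (@Csum_eqD _ Dk (D2 l) _ j.+1); last first.
    move=> i x hi; rewrite /Dk; have -> : (i == j.+1) = false by apply/negbTE; lia.
    by rewrite andbT.
  apply: (@Csum_ext (P (l + j).+2) (D2 l) (wl l) j.+1 _ (fun M => good g (l + j).+2 (y + M))) => M.
  rewrite (big_pred1 (Ordinal hmk)) => [|x].
    by congr (good _ _ _); rewrite /y /=; lia.
  by rewrite /Dk /D2 /= addSn addnS ltn_ord eqxx /= -val_eqE.
have E1 : ((l + j).+2.-1 = l + j.+1)%N by rewrite addnS.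
have E2 : ((l + j).+2.-2 = l + j)%N by [].
rewrite HS E2 E1 !nring_Nn // lerBlDr -natrM -natrD ler_nat.
have := countB g l j y; rewrite gy !muln1 addnC //.
Qed.
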